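(* Let $K_\infty=s_1s_2s_3\dots$ be the fixed point beginning with $1$ of the substitution $1\mapsto10$, $0\mapsto11$, let $t_k=\sum_{i=1}^k s_i\pmod 2$, $\epsilon_k=1-2t_k=(-1)^{\sum_{i=1}^k s_i}$, and $\tau_\infty=\sum_{k\ge1}t_k2^{-k}$. Let $\Xi(z)=\prod_{n=0}^\infty(1-z^{2^n})$ for $|z|<1$. Then $\Xi(z)=1+\sum_{k\ge1}\epsilon_kz^k$ as power series, $\Xi(z)=(1-z)\Xi(z^2)$, and $\tau_\infty=1-\frac12\,\Xi(1/2)$. *)

(* Defs.v *)
From HB Require Import structures.
From mathcomp Require Import all_boot all_order all_algebra.
From mathcomp Require Import complex.
From mathcomp Require Import all_classical all_reals all_analysis.
Set Implicit Arguments. Unset Strict Implicit. Unset Printing Implicit Defensive.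
Import Order.TTheory GRing.Theory Num.Theory.
Import numFieldNormedType.Exports.
Local Open Scope ring_scope.

(* Letters of the alphabet {0,1} are encoded as booleans: true = 1, false = 0.
   An infinite word s_1 s_2 s_3 ... is a function s : nat -> bool, where only
   the values at indices k >= 1 are relevant. *)

Definition Ksubst (a : bool) : seq bool := if a then [:: true; false] else [:: true; true].

Definition Ksubst_word (w : seq bool) : seq bool := flatten (map Ksubst w).

Definition prefix (s : nat -> bool) (n : nat) : seq bool := [seq s i | i <- iota 1 n].

(* s is a fixed point of the substitution (extended to infinite words):
   for every n, the image of the prefix of length n is a prefix of s. *)
Definition is_Kfixed_point (s : nat -> bool) : Prop :=
  forall n i, (i < size (Ksubst_word (prefix s n)))%N ->
    nth false (Ksubst_word (prefix s n)) i = s i.+1.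

Definition ssum (s : nat -> bool) (k : nat) : nat := (\sum_(1 <= i < k.+1) s i)%N.

Definition tk (s : nat -> bool) (k : nat) : nat := (ssum s k %% 2)%N.

Definition epsk {R : pzRingType} (s : nat -> bool) (k : nat) : R := (-1) ^+ ssum s k.

Definition Xi_partial {R : pzRingType} (z : R) (N : nat) : R :=
  \prod_(n < N) (1 - z ^+ (2 ^ n)%N).

Definition Xi {R : numFieldType} (z : R) : R := limn (Xi_partial z).

(* Main.v *)
Set Warnings "-notation-overridden,-ambiguous-paths,-notation-incompatible-prefix".
Require Import Defs.
From HB Require Import structures.
From mathcomp Require Import all_boot all_order all_algebra.
From mathcomp Require Import complex.
From mathcomp Require Import zify ring.
From mathcomp Require Import all_classical all_reals all_analysis.
Import Order.TTheory GRing.Theory Num.Theory.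
Import numFieldNormedType.Exports.
Local Open Scope classical_set_scope.
Local Open Scope ring_scope.
Local Open Scope complex_scope.

Lemma Ksubst_word_rcons w a : Ksubst_word (rcons w a) = Ksubst_word w ++ Ksubst a.
Proof. by rewrite /Ksubst_word map_rcons -cats1 flatten_cat /= cats0. Qed.

Lemma size_Ksubst_word w : size (Ksubst_word w) = (size w).*2.
Proof.
elim/last_ind: w => [//|w a IH].
by rewrite Ksubst_word_rcons size_cat IH size_rcons; case: a => /=; rewrite doubleS addn2.
Qed.

Lemma prefixS s n : Defs.prefix s n.+1 = rcons (Defs.prefix s n) (s n.+1).
Proof. by rewrite /Defs.prefix -[n.+1]addn1 iotaD map_cat cats1 addnC. Qed.

Lemma size_prefix s n : size (Defs.prefix s n) = n.
Proof. by rewrite /Defs.prefix size_map size_iota. Qed.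

Lemma fix_odd s : is_Kfixed_point s -> forall m, s (m.*2.+1) = true.
Proof.
move=> h m; have := h m.+1 (m.*2).
rewrite prefixS Ksubst_word_rcons size_cat size_Ksubst_word size_prefix.
rewrite nth_cat size_Ksubst_word size_prefix ltnn subnn.
  by case: (s m.+1) => /= <- //; rewrite addn2 ltnS ?leqnn.
Qed.

Lemma fix_even s : is_Kfixed_point s -> forall m, s (m.+1.*2) = ~~ s m.+1.
Proof.
move=> h m; have := h m.+1 (m.*2.+1).
rewrite prefixS Ksubst_word_rcons size_cat size_Ksubst_word size_prefix.
rewrite nth_cat size_Ksubst_word size_prefix (_ : m.*2.+1 < m.*2 = false)%N ?subSn // ?subnn; last by rewrite ltnNge leqnSn.
by case: (s m.+1) => /= <- //; rewrite addn2.
Qed.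

Lemma ssumS s n : ssum s n.+1 = (ssum s n + s n.+1)%N.
Proof. by rewrite /ssum big_nat_recr. Qed.

Lemma ssum0 s : ssum s 0 = 0%N.
Proof. by rewrite /ssum big_geq. Qed.

Lemma ssum_double s : is_Kfixed_point s -> forall k, (ssum s k.*2 + ssum s k = k.*2)%N.
Proof.
move=> h; elim=> [|k IH]; first by rewrite ssum0.
rewrite doubleS !ssumS fix_even // -doubleS fix_odd //.
have -> : (ssum s k.*2 + true + ~~ s k.+1 + (ssum s k + s k.+1) = (ssum s k.*2 + ssum s k) + 2)%N.
  by case: (s k.+1) => /=; rewrite !addnA; lia.
by rewrite IH addn2.
Qed.

Section Alg.
Variable (K : comPzRingType) (s : nat -> bool) (hfix : is_Kfixed_point s).

Lemma epsk0 : epsk s 0 = 1 :> K.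
Proof. by rewrite /epsk ssum0. Qed.

Lemma epsk_even k : epsk s k.*2 = epsk s k :> K.
Proof.
rewrite /epsk -signr_odd -[in RHS]signr_odd; congr (_ ^+ _).
have := congr1 odd (@ssum_double s hfix k); rewrite oddD odd_double.
by case: (odd _); case: (odd _).
Qed.

Lemma epsk_odd k : epsk s k.*2.+1 = - epsk s k :> K.
Proof. by rewrite {1}/epsk ssumS (@fix_odd s hfix) addn1 exprS mulN1r -[in RHS]epsk_even. Qed.

Lemma sum_split (V : nmodType) (F : nat -> V) n :
  \sum_(0 <= k < n.*2) F k = \sum_(0 <= k < n) (F k.*2 + F k.*2.+1).
Proof.
elim: n => [|n IH]; first by rewrite !big_geq.
by rewrite doubleS !big_nat_recr //= IH addrA.
Qed.

Lemma Xi_partialS (z : K) N : Xi_partial z N.+1 = (1 - z) * Xi_partial (z ^+ 2) N.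
Proof.
rewrite /Xi_partial big_ord_recl /= expn0 expr1; congr (_ * _).
by apply: eq_bigr => i _; rewrite /bump /= add1n expnS exprM.
Qed.

Lemma Xi_partial_sum N (z : K) :
  Xi_partial z N = \sum_(0 <= k < 2 ^ N) epsk s k * z ^+ k.
Proof.
elim: N z => [|N IH] z.
  by rewrite /Xi_partial big_ord0 expn0 big_nat1 epsk0 expr0 mulr1.
rewrite Xi_partialS IH expnS mul2n sum_split mulr_sumr; apply: eq_bigr => k _.
rewrite epsk_even epsk_odd -exprM -muln2 mulnC exprS; ring.
Qed.
End Alg.
Lemma pow2_cvg : (fun N => (2 ^ N)%N) @ \oo --> \oo.
Proof.
move=> P [n _ Pn]; exists n => // m /= nm; apply: Pn => /=.
apply: leq_trans nm _; apply: ltnW; exact: ltn_expl.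
Qed.

Section Ana.
Variable (K : numFieldType) (s : nat -> bool) (hfix : is_Kfixed_point s).
Definition cz (z : K) := fun k => epsk s k * z ^+ k.

Lemma Xi_cvg_lim z : cvgn (series (cz z)) -> Xi_partial z @ \oo --> limn (series (cz z)).
Proof.
move=> h; have -> : Xi_partial z = series (cz z) \o (fun N => (2 ^ N)%N).
  by apply/funext => N /=; rewrite (@Xi_partial_sum _ s hfix).
exact: cvg_comp pow2_cvg h.
Qed.

Lemma Xi_lim z : cvgn (series (cz z)) -> Xi z = limn (series (cz z)).
Proof. by move=> h; apply: cvg_lim => //; exact: Xi_cvg_lim. Qed.

Lemma S_cvg z : cvgn (series (cz z)) ->
  (fun N => 1 + \sum_(1 <= k < N) epsk s k * z ^+ k) @ \oo --> Xi z.
Proof.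
move=> h; rewrite (Xi_lim _ h); apply: cvg_trans h; apply: near_eq_cvg.
exists 1%N => // n /= hn.
by rewrite /series /= big_ltn // /cz epsk0 expr0 mulr1.
Qed.

Lemma Xi_funeq z : cvgn (series (cz z)) -> cvgn (series (cz (z ^+ 2))) ->
  Xi z = (1 - z) * Xi (z ^+ 2).
Proof.
move=> h1 h2.
have c1 : [sequence Xi_partial z n.+1]_n @ \oo --> Xi z.
  by rewrite cvg_shiftS (Xi_lim _ h1); exact: Xi_cvg_lim.
have c2 : [sequence Xi_partial z n.+1]_n @ \oo --> (1 - z) * Xi (z ^+ 2).
  have -> : [sequence Xi_partial z n.+1]_n = (fun n => (1 - z) * Xi_partial (z ^+ 2) n).
    by apply/funext => n /=; rewrite Xi_partialS.
  by apply: cvgMl_tmp; rewrite (Xi_lim _ h2); exact: Xi_cvg_lim.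
exact: cvg_unique c1 c2.
Qed.
End Ana.

Lemma abs_cvg (R : realType) (u : R ^nat) (r : R) : 0 <= r -> r < 1 ->
  (forall k, `|u k| <= r ^+ k) -> cvgn (series u).
Proof.
move=> r0 r1 hu; apply: normed_cvg.
apply: (@series_le_cvg _ _ (geometric 1 r)) => [n|n|n|].
- by rewrite normr_ge0.
- by rewrite /= mul1r exprn_ge0.
- by rewrite /= mul1r.
- by apply: is_cvg_geometric_series; rewrite ger0_norm.
Qed.

Section Cplx.
Variable R : realType.
Implicit Types (x y w : R[i]).

Lemma ReB x y : complex.Re (x - y) = complex.Re x - complex.Re y.
Proof. by case: x; case: y. Qed.
Lemma ReD x y : complex.Re (x + y) = complex.Re x + complex.Re y.
Proof. by case: x; case: y. Qed.
Lemma ImB x y : complex.Im (x - y) = complex.Im x - complex.Im y.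
Proof. by case: x; case: y. Qed.
Lemma ImD x y : complex.Im (x + y) = complex.Im x + complex.Im y.
Proof. by case: x; case: y. Qed.

Definition nc w : R := Num.sqrt (complex.Re w ^+ 2 + complex.Im w ^+ 2).

Lemma ncE w : `|w| = (nc w)%:C.
Proof. exact: normc_def. Qed.

Lemma nc_ge0 w : 0 <= nc w.
Proof. exact: sqrtr_ge0. Qed.

Lemma nc_Re w : `|complex.Re w| <= nc w.
Proof. by rewrite -sqrtr_sqr ler_wsqrtr // lerDl sqr_ge0. Qed.

Lemma nc_Im w : `|complex.Im w| <= nc w.
Proof. by rewrite -sqrtr_sqr ler_wsqrtr // lerDr sqr_ge0. Qed.

Lemma nc_le w : nc w <= `|complex.Re w| + `|complex.Im w|.
Proof.
rewrite /nc -[X in _ <= X]ger0_norm ?addr_ge0 // -sqrtr_sqr ler_wsqrtr //.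
rewrite sqrrD -[complex.Re w ^+ 2](real_normK (num_real _)) -[complex.Im w ^+ 2](real_normK (num_real _)).
by rewrite -addrA lerD2l lerDr mulrn_wge0 // mulr_ge0.
Qed.

Lemma Re_sum (u : nat -> R[i]) n :
  complex.Re (\sum_(0 <= k < n) u k) = \sum_(0 <= k < n) complex.Re (u k).
Proof.
elim: n => [|n IH]; first by rewrite !big_geq.
by rewrite !big_nat_recr //= ReD IH.
Qed.

Lemma Im_sum (u : nat -> R[i]) n :
  complex.Im (\sum_(0 <= k < n) u k) = \sum_(0 <= k < n) complex.Im (u k).
Proof.
elim: n => [|n IH]; first by rewrite !big_geq.
by rewrite !big_nat_recr //= ImD IH.
Qed.

Lemma cvg_complex (u : nat -> (R[i] : numFieldType)) :
  cvgn (series (fun k => complex.Re (u k))) ->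
  cvgn (series (fun k => complex.Im (u k))) -> cvgn (series u).
Proof.
move=> hr hi.
suff H : series u @ \oo --> ((limn (series (fun k => complex.Re (u k))) +i*
                     limn (series (fun k => complex.Im (u k)))) : (R[i] : numFieldType)).
  exact: cvgP H.
apply/cvgrPdist_lt => eps; rewrite ltcE => /andP[/eqP eI eR].
have e2 : 0 < complex.Re eps / 2 by rewrite divr_gt0.
move/cvgrPdist_lt: hr => /(_ _ e2) hr'.
move/cvgrPdist_lt: hi => /(_ _ e2) hi'.
apply: filterS2 hr' hi' => n h1 h2.
rewrite ncE.
have -> : eps = (complex.Re eps)%:C by move: eI; case: (eps) => a b /= ->.
rewrite ltcR; apply: le_lt_trans (nc_le _) _.
rewrite ReB ImB /= /series /= Re_sum Im_sum.
by rewrite [X in _ < X](splitr (complex.Re eps)) ltrD.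
Qed.
End Cplx.
Arguments nc {R}.
Arguments ncE {R}.
Arguments nc_ge0 {R}.
Arguments nc_Re {R}.
Arguments nc_Im {R}.
Arguments cvg_complex {R}.


Lemma epsk_norm (K : numDomainType) s k : `|epsk s k : K| = 1.
Proof. by rewrite /epsk normrX normrN1 expr1n. Qed.

Lemma cvgC (R : realType) s (z : R[i]) : `|z| < 1 -> cvgn (series (@cz R[i] s z)).
Proof.
move=> hz.
have nz1 : nc z < 1 by move: hz; rewrite ncE ltcE /= => /andP[].
have hn k : nc (@cz _ s z k) = nc z ^+ k.
  apply: complexI; rewrite -ncE /cz normrM epsk_norm mul1r normrX ncE.
  by rewrite rmorphXn.
apply: cvg_complex; apply: (@abs_cvg _ _ (nc z) (nc_ge0 z) nz1) => k; rewrite -hn.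
all: first [exact: nc_Re | exact: nc_Im].
Qed.

Lemma cvgR (R : realType) s (z : R) : `|z| < 1 -> cvgn (series (@cz _ s z)).
Proof.
move=> hz; apply: (@abs_cvg _ _ _ (normr_ge0 z) hz) => k.
by rewrite /cz normrM epsk_norm mul1r normrX.
Qed.

Lemma tk_eps (R : realType) s k : (tk s k)%:R = (1 - epsk s k) / 2 :> R.
Proof.
rewrite /tk /epsk modn2 -signr_odd; case: (odd _) => /=.
  by rewrite expr1 opprK -mulr2n divff // pnatr_eq0.
by rewrite expr0 subrr mul0r.
Qed.

Theorem mainTheorem11 (R : realType) (s : nat -> bool)
  (hs1 : s 1%N = true) (hfix : is_Kfixed_point s) :
  (forall z : R[i], `|z| < 1 ->
     [/\ Xi_partial z @ \oo --> Xi z,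
         (fun N => 1 + \sum_(1 <= k < N) epsk s k * z ^+ k) @ \oo --> Xi z
       & Xi z = (1 - z) * Xi (z ^+ 2)]) /\
  (fun N => \sum_(1 <= k < N) (tk s k)%:R * (2 ^- k : R)) @ \oo
     --> 1 - 2^-1 * Xi (2^-1 : R).
Proof.
split.
  move=> z hz.
  have hz2 : `|z ^+ 2| < 1 by rewrite normrX exprn_ilt1.
  have h1 := @cvgC _ s _ hz.
  have h2 := @cvgC _ s _ hz2.
  split.
  - rewrite (@Xi_lim _ s hfix _ h1).
   exact: (@Xi_cvg_lim _ s hfix _ h1).
  - exact: (@S_cvg _ s hfix _ h1).
  - exact: (@Xi_funeq _ s hfix _ h1 h2).
have hz : `|2^-1 : R| < 1 by rewrite ger0_norm ?invr_ge0 // invf_lt1 // ltr1n.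
have hS := @S_cvg _ s hfix _ (@cvgR _ s _ hz).
have hg := @cvg_geometric_series R 1 (2^-1) hz.
have L : (2^-1 * (1 / (1 - 2^-1)) - 2^-1 * Xi (2^-1) : R) = 1 - 2^-1 * Xi (2^-1).
  congr (_ - _); rewrite mul1r -invfM mulrBr mulr1 -[2 * 2^-1]/(2 / 2) divff ?pnatr_eq0 //.
  by rewrite mulr2n addrK invr1.
rewrite -L.
apply: cvg_trans (cvgB (cvgMl_tmp (a:=2^-1) hg) (cvgMl_tmp (a:=2^-1) hS)).
apply: near_eq_cvg; exists 1%N => // N /= hN.
rewrite !fctE /series /= big_ltn // expr0 mul1r -mulrBr opprD addrACA subrr add0r.
rewrite -sumrB mulr_sumr; apply: eq_bigr => k _.
rewrite tk_eps exprVn mul1r; ring.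
Qed.
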